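(* Let $S=\{\pi_1,\pi_2,\pi_3\}$ be a linearly dependent set of three non-trivial permutations with $|\pi_1|\ge|\pi_2|\ge|\pi_3|$. If $|\pi_1|>3$, then $|\pi_2|=|\pi_3|=2$.
   Context: A $k$-permutation is a bijection of $[k]=\{1,\dots,k\}$; $|\pi|$ denotes its order, and a permutation is non-trivial if its order is at least two. The gradient polynomial of a $k$-permutation $\pi$ is $P_\pi(\alpha,\beta)=k!\sum_{m\in[k]}\left(\frac{k-m}{1-\alpha}-\frac{m-1}{\alpha}\right)\left(\frac{k-\pi(m)}{1-\beta}-\frac{\pi(m)-1}{\beta}\right)\frac{\alpha^{m-1}(1-\alpha)^{k-m}\beta^{\pi(m)-1}(1-\beta)^{k-\pi(m)}}{(m-1)!(k-m)!(\pi(m)-1)!(k-\pi(m))!}$. A set $S$ of (distinct) permutations is linearly dependent if the gradient polynomials $P_\pi$, $\pi\in S$, are linearly dependent over $\mathbb{R}$. *)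

(* Defs.v *)
From HB Require Import structures.
From mathcomp Require Import all_boot all_order all_algebra all_fingroup.
From mathcomp Require Import reals.
Set Implicit Arguments. Unset Strict Implicit. Unset Printing Implicit Defensive.
Import Order.TTheory GRing.Theory Num.Theory.
Local Open Scope ring_scope.

(* A k-permutation is a p : 'S_k; the element m in [k] = {1..k} is encoded by
   i : 'I_k with m = i + 1, and pi(m) = p i + 1. *)

(* A permutation of arbitrary size: the pair (k, p) with p a k-permutation.
   |pi| (the order of pi) is the size k. *)
Definition anyperm := {k : nat & 'S_k}.
Definition porder (s : anyperm) : nat := projT1 s.

Definition gradpoly_k {R : realType} (k : nat) (p : 'S_k) (a b : R) : R :=
  (k `!)%:R * \sum_(i < k)
    ( ((k - i.+1)%:R / (1 - a) - (i : nat)%:R / a)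
    * ((k - (p i).+1)%:R / (1 - b) - (p i : nat)%:R / b)
    * (a ^+ i * (1 - a) ^+ (k - i.+1) * b ^+ (p i) * (1 - b) ^+ (k - (p i).+1))
    / ((i `!)%:R * ((k - i.+1) `!)%:R * ((p i : nat) `!)%:R * ((k - (p i).+1) `!)%:R)).

Definition gradpoly {R : realType} (s : anyperm) (a b : R) : R :=
  gradpoly_k (projT2 s) a b.

(* Linear dependence over R of three gradient polynomials (as functions on the
   open unit square, where the defining formula is meaningful; since these are
   polynomials, this is equivalent to dependence as polynomials). *)
Definition lin_dep3 (R : realType) (s1 s2 s3 : anyperm) : Prop :=
  exists c1 c2 c3 : R, [\/ c1 != 0, c2 != 0 | c3 != 0] /\
    forall a b : R, 0 < a < 1 -> 0 < b < 1 ->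
      c1 * gradpoly s1 a b + c2 * gradpoly s2 a b + c3 * gradpoly s3 a b = 0.

(* Main.v *)
Require Import Defs.
From HB Require Import structures.
From mathcomp Require Import all_boot all_order all_algebra all_fingroup.
From mathcomp Require Import reals.
From mathcomp Require Import ring lra zify.
Set Implicit Arguments. Unset Strict Implicit. Unset Printing Implicit Defensive.
Import Order.TTheory GRing.Theory Num.Theory.
Local Open Scope ring_scope.
Lemma bin_id n N j i : (j <= n)%N -> (n <= N)%N -> (j <= i)%N -> (i - j <= N - n)%N ->
  ('C(i,j) * 'C(N-i,n-j) * 'C(N,i) = 'C(n,j) * 'C(N-n,i-j) * 'C(N,n))%N.
Proof.
move=> hjn hnN hji hij.
set t := (i - j)%N; set e := (N - n - t)%N.
have h1 : ('C(i,j) * (j`! * t`!))%N = i`! by rewrite bin_fact.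
have h2 : ('C(N-i,n-j) * ((n-j)`! * e`!))%N = (N-i)`!.
  have -> : e = (N - i - (n - j))%N by rewrite /e /t; lia.
  by rewrite bin_fact //; lia.
have h3 : ('C(N,i) * (i`! * (N-i)`!))%N = N`! by rewrite bin_fact //; lia.
have h4 : ('C(n,j) * (j`! * (n-j)`!))%N = n`! by rewrite bin_fact.
have h5 : ('C(N-n,t) * (t`! * e`!))%N = (N-n)`! by rewrite bin_fact.
have h6 : ('C(N,n) * (n`! * (N-n)`!))%N = N`! by rewrite bin_fact.
have hP : (0 < j`! * t`! * ((n-j)`! * e`!))%N by rewrite !muln_gt0 !fact_gt0.
apply/eqP; rewrite -(eqn_pmul2r hP); apply/eqP.
transitivity (N`!).
  by rewrite -h3 -h1 -h2; ring.
by rewrite -h6 -h4 -h5; ring.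
Qed.


Lemma sum_bin_row N j m : (\sum_(l < N.+1) 'C(l,j) * 'C(N-l,m) = 'C(N.+1, (j+m).+1))%N.
Proof.
elim: N m => [|N IH] m.
  rewrite big_ord1 binS !bin0n.
  by case: j => [|j]; case: m => [|m].
rewrite big_ord_recr subnn bin0n.
case: m => [|m].
  rewrite eqxx muln1 addn0 [in RHS]binS.
  congr (_ + _)%N.
  have := IH 0%N; rewrite addn0 => <-.
  by apply: eq_bigr => l _; rewrite !bin0.
have -> : (m.+1 == 0)%N = false by [].
rewrite muln0 -[RHS]addn0; congr (_ + _)%N.
transitivity (\sum_(l < N.+1) ('C(l,j) * 'C(N-l,m.+1) + 'C(l,j) * 'C(N-l,m)))%N.
  apply: eq_bigr => l _.
  rewrite subSn ?binS ?mulnDr //; exact: (ltn_ord l).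
rewrite big_split IH IH [in RHS]binS.
by rewrite addnS.
Qed.

Lemma bin_inj m1 m2 k : (0 < k)%N -> 'C(m1,k) = 'C(m2,k) -> (0 < 'C(m1,k))%N -> m1 = m2.
Proof.
move=> hk e hp.
have strict : forall a b, (a < b)%N -> (0 < 'C(a,k))%N -> ('C(a,k) < 'C(b,k))%N.
  move=> a b hab; case: k hk {e hp} => [//|k] _ ha.
  rewrite bin_gt0 in ha.
  apply: (leq_trans _ (leq_bin2l _ hab)).
  by rewrite binS -addn1 leq_add2l bin_gt0; lia.
case: (ltngtP m1 m2) => // h.
  by have := strict _ _ h hp; rewrite e ltnn.
have hp2 : (0 < 'C(m2,k))%N by rewrite -e.
by have := strict _ _ h hp2; rewrite e ltnn.
Qed.

Lemma zcols n N j : (3 <= n)%N -> (n < N)%N -> (j <= n)%N ->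
  exists x y z, [/\ (x != y) && (x != z) && (y != z), (x <= N)%N && (y <= N)%N && (z <= N)%N &
    ((x < j) || (N - x < n - j))%N && ((y < j) || (N - y < n - j))%N && ((z < j) || (N - z < n - j))%N].
Proof.
move=> h3 hnN; case: j => [|[|[|j]]] hj;
  [exists N, N.-1, N.-2 | exists 0%N, N, N.-1 | exists 0%N, 1%N, N | exists 0%N, 1%N, 2%N];
  split; lia.
Qed.

Section PolyPart.
Variable R : realType.

Definition Bp (N i : nat) : {poly R} := ('C(N,i))%:R *: ('X^i * (1 - 'X)^+(N - i)).
Definition Up N i : {poly R} := (Bp N i)^`().

Lemma Bp_sum N : \sum_(i < N.+1) Bp N i = 1.
Proof.
have := exprDn (1 - 'X : {poly R}) 'X N.
rewrite subrK expr1n => ->.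
by apply: eq_bigr => i _; rewrite /Bp scaler_nat mulrC.
Qed.

Lemma coef_Bp_lt N i m : (m < i)%N -> (Bp N i)`_m = 0.
Proof. by move=> h; rewrite coefZ coefXnM h mulr0. Qed.

Lemma coef_Bp_eq N i : (Bp N i)`_i = ('C(N,i))%:R.
Proof.
rewrite coefZ coefXnM ltnn subnn -horner_coef0 horner_exp !hornerE.
by rewrite subr0 expr1n mulr1.
Qed.

Lemma Bp_indep N (y : nat -> R) : \sum_(i < N.+1) y i *: Bp N i = 0 ->
  forall i, (i <= N)%N -> y i = 0.
Proof.
move=> H m; elim/ltn_ind: m => m IH hm.
have := congr1 (fun p : {poly R} => p`_m) H; rewrite coef_sum coef0.
rewrite (bigD1 (Ordinal (hm : (m < N.+1)%N))) //= big1 => [|i ne].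
  rewrite addr0 coefZ coef_Bp_eq => /eqP; rewrite mulf_eq0 pnatr_eq0 eqn0Ngt bin_gt0 hm orbF.
  by move/eqP.
rewrite coefZ.
have ne' : (nat_of_ord i != m) by apply: contra ne => /eqP h; apply/eqP/val_inj.
case: (ltngtP i m) => h.
- by rewrite IH // ?mul0r // -ltnS.
- by rewrite coef_Bp_lt // mulr0.
- by move: ne'; rewrite h eqxx.
Qed.

Lemma deriv0_const (p : {poly R}) : p^`() = 0 -> p = (p`_0)%:P.
Proof.
move=> H; apply/polyP => i; rewrite coefC; case: i => [|i] //=.
have := congr1 (fun q : {poly R} => q`_i) H; rewrite coef_deriv coef0 => /eqP.
by rewrite mulrn_eq0 /= => /eqP.
Qed.

Lemma Up_sum N : \sum_(i < N.+1) Up N i = 0.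
Proof. by rewrite /Up -linear_sum Bp_sum; apply/polyP => i; rewrite coef_deriv coef1 coef0 /= mul0rn. Qed.

Lemma Up_kernel N (x : nat -> R) : \sum_(i < N.+1) x i *: Up N i = 0 ->
  forall i, (i <= N)%N -> x i = x 0%N.
Proof.
move=> H.
set q := \sum_(i < N.+1) x i *: Bp N i.
have dq : q^`() = 0.
  rewrite /q linear_sum -[RHS]H. apply: eq_bigr => i _; by rewrite linearZ.
have qc := deriv0_const dq.
set c := q`_0 in qc.
have H2 : \sum_(i < N.+1) (x i - c) *: Bp N i = 0.
  under eq_bigr do rewrite scalerBl.
  by rewrite sumrB -/q qc -scaler_sumr Bp_sum alg_polyC subrr.
move=> i hi.
have := @Bp_indep N (fun i => x i - c) H2 i hi; have := @Bp_indep N (fun i => x i - c) H2 0 (leq0n N).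
by move=> /eqP; rewrite subr_eq0 => /eqP -> /eqP; rewrite subr_eq0 => /eqP.
Qed.

Lemma poly_vanish (p : {poly R}) :
  (forall a : R, 0 < a -> a < 1 -> p.[a] = 0) -> p = 0.
Proof.
move=> H; apply/eqP; apply: contraT => pn0.
pose rs := [seq ((m.+2)%:R : R)^-1 | m <- iota 0 (size p)].
have := @max_poly_roots _ p rs pn0.
have -> : all (root p) rs.
  apply/allP => x /mapP [m _ ->]; apply/rootP; apply: H.
    by rewrite invr_gt0 ltr0Sn.
  by rewrite invf_lt1 ?ltr0Sn // ltr1n.
have -> : uniq rs.
  rewrite map_inj_uniq ?iota_uniq // => m1 m2 /invr_inj /eqP.
  by rewrite eqr_nat => /eqP [].
by rewrite size_map size_iota ltnn => /(_ isT isT).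
Qed.


Definition Ec (n N j i : nat) : R := (('C(i,j) * 'C(N-i, n-j))%N)%:R / ('C(N,n))%:R.

Lemma Ec_ge0 n N j i : 0 <= Ec n N j i.
Proof. by rewrite /Ec divr_ge0 ?ler0n. Qed.

Lemma Ec_zero n N j i : ((i < j) || (N - i < n - j))%N -> Ec n N j i = 0.
Proof.
case/orP => h; rewrite /Ec.
  by rewrite bin_small // mul0n mul0r.
by rewrite (bin_small h) muln0 mul0r.
Qed.

Lemma Ec_mulC n N j i : (j <= n)%N -> (n <= N)%N -> (j <= i)%N -> (i - j <= N - n)%N ->
  Ec n N j i * ('C(N,i))%:R = (('C(n,j) * 'C(N-n,i-j))%N)%:R.
Proof.
move=> h1 h2 h3 h4; rewrite /Ec mulrAC -natrM bin_id //.
by rewrite natrM mulfK // pnatr_eq0 eqn0Ngt bin_gt0 negbK.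
Qed.

Lemma Bp_elev n N j : (n <= N)%N -> (j <= n)%N ->
  Bp n j = \sum_(i < N.+1) Ec n N j i *: Bp N i.
Proof.
move=> hnN hjn.
set d := (N - n)%N.
have stepA : Bp n j = \sum_(t < d.+1)
   (('C(n,j) * 'C(d,t))%N)%:R *: ('X^(j+t) * (1 - 'X)^+(N-(j+t))).
  rewrite /Bp.
  transitivity (('C(n,j))%:R *: ('X^j * (1 - 'X)^+(n - j) * ((1 - 'X) + 'X)^+d) : {poly R}).
    by rewrite subrK expr1n mulr1.
  rewrite (exprDn (1 - 'X) 'X d) mulr_sumr scaler_sumr; apply: eq_bigr => [[t ht]] _ /=.
  rewrite mulrnAr -scaler_nat scalerA -natrM; congr (_ *: _).
  have -> : (N - (j+t) = (n - j) + (d - t))%N by rewrite /d; lia.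
  rewrite !exprD; ring.
rewrite stepA.
transitivity (\sum_(0 <= i < N.+1) (Ec n N j i * ('C(N,i))%:R) *: ('X^i * (1 - 'X)^+(N-i))); last first.
  by rewrite big_mkord; apply: eq_bigr => i _; rewrite /Bp scalerA.
symmetry.
rewrite (@big_cat_nat _ _ _ j) //=; last by lia.
rewrite [X in X + _]big_nat_cond [X in X + _]big1 ?add0r; last first.
  by move=> i /andP [/andP [_ hi] _]; rewrite Ec_zero ?hi // mul0r scale0r.
rewrite (@big_cat_nat _ _ _ (j + d.+1)) ?leq_addr //=; last by lia.
rewrite [X in _ + X]big_nat_cond [X in _ + X]big1 ?addr0; last first.
  move=> i /andP [/andP [hi hi'] _]; rewrite Ec_zero ?mul0r ?scale0r //.
  apply/orP; right; rewrite /d in hi; lia.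
rewrite -{1}(add0n j) big_addn addnC addnK big_mkord.
apply: eq_bigr => [[t ht]] _ /=.
rewrite Ec_mulC //; try lia.
by rewrite addnK addnC.
Qed.

Lemma Up_elev n N j : (n <= N)%N -> (j <= n)%N ->
  Up n j = \sum_(i < N.+1) Ec n N j i *: Up N i.
Proof.
move=> h1 h2; rewrite /Up (Bp_elev h1 h2) linear_sum.
by apply: eq_bigr => i _; rewrite linearZ.
Qed.

Lemma size_1subX_exp m : (size ((1 - 'X : {poly R}) ^+ m) <= m.+1)%N.
Proof.
have h : size (1 - 'X : {poly R}) = 2%N by rewrite -opprB size_opp -polyC1 size_XsubC.
by have := size_poly_exp_leq (1 - 'X : {poly R}) m; rewrite h mul1n.
Qed.

Lemma coef_Bp_big n j m : (j <= n)%N -> (n < m)%N -> (Bp n j)`_m = 0.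
Proof.
move=> hj h; rewrite coefZ coefXnM; case: ifP => [_|/negbT hm]; first by rewrite mulr0.
rewrite nth_default ?mulr0 //.
apply: leq_trans (size_1subX_exp _) _; lia.
Qed.

Definition xtop N i : R := (Bp N i)`_N.

Lemma top_kill n N j : (n < N)%N -> (j <= n)%N ->
  \sum_(i < N.+1) Ec n N j i * xtop N i = 0.
Proof.
move=> h1 h2; have := congr1 (fun p : {poly R} => p`_N) (Bp_elev (ltnW h1) h2).
rewrite /= coef_sum coef_Bp_big // => E; rewrite [RHS]E; apply: eq_bigr => i _.
by rewrite coefZ.
Qed.

Lemma xtop_sum N : (0 < N)%N -> \sum_(i < N.+1) xtop N i = 0.
Proof.
move=> h; have := congr1 (fun p : {poly R} => p`_N) (Bp_sum N).
rewrite /= coef_sum coef1 => E; by rewrite /xtop E eqn0Ngt h.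
Qed.

Lemma xtop_N N : xtop N N = 1.
Proof.
by rewrite /xtop coefZ coefXnM ltnn !subnn expr0 coef1 binn mulr1.
Qed.

Definition Phi n (Z : nat -> nat -> R) (a b : R) : R :=
  \sum_(j < n.+1) \sum_(m < n.+1) Z j m * ((Up n j).[a] * (Up n m).[b]).

Lemma PhiL n (Z1 Z2 : nat -> nat -> R) c1 c2 a b :
  Phi n (fun i l => c1 * Z1 i l + c2 * Z2 i l) a b = c1 * Phi n Z1 a b + c2 * Phi n Z2 a b.
Proof.
rewrite /Phi !mulr_sumr -big_split; apply: eq_bigr => j _ /=.
rewrite !mulr_sumr -big_split; apply: eq_bigr => m _ /=.
by rewrite mulrDl !mulrA.
Qed.

Definition Elev n N (Z : nat -> nat -> R) (i l : nat) : R :=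
  \sum_(j < n.+1) \sum_(m < n.+1) Ec n N j i * Z j m * Ec n N m l.

Lemma Phi_elev n N Z a b : (n <= N)%N -> Phi n Z a b = Phi N (Elev n N Z) a b.
Proof.
move=> hnN; rewrite /Phi /Elev.
have ev : forall j (x : R), (j < n.+1)%N -> (Up n j).[x] = \sum_(i < N.+1) Ec n N j i * (Up N i).[x].
  by move=> j x hj; rewrite (Up_elev hnN hj) horner_sum; apply: eq_bigr => i _; rewrite hornerZ.
transitivity (\sum_(j < n.+1) \sum_(m < n.+1) \sum_(i < N.+1) \sum_(l < N.+1)
   Ec n N j i * Z j m * Ec n N m l * ((Up N i).[a] * (Up N l).[b])).
  apply: eq_bigr => j _; apply: eq_bigr => m _.
  rewrite (ev j a (ltn_ord j)) (ev m b (ltn_ord m)) mulr_suml mulr_sumr.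
  apply: eq_bigr => i _; rewrite mulr_sumr mulr_sumr; apply: eq_bigr => l _.
  ring.
symmetry.
under eq_bigr => i _ do under eq_bigr => l _ do rewrite mulr_suml.
under eq_bigr => i _ do under eq_bigr => l _ do under eq_bigr => j _ do rewrite mulr_suml.
under eq_bigr => i _ do rewrite exchange_big /=.
rewrite exchange_big /=.
under eq_bigr => j _ do under eq_bigr => i _ do rewrite exchange_big /=.
under eq_bigr => j _ do rewrite exchange_big /=.
done.
Qed.

Definition addv N (Y : nat -> nat -> R) :=
  forall i l, (i <= N)%N -> (l <= N)%N -> Y i l + Y 0%N 0%N = Y i 0%N + Y 0%N l.

Lemma Phi_zero N Y : (forall a b, 0 < a -> a < 1 -> 0 < b -> b < 1 -> Phi N Y a b = 0) ->
  addv N Y.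
Proof.
move=> H.
have step1 : forall b, 0 < b -> b < 1 -> forall i, (i <= N)%N ->
   \sum_(l < N.+1) Y i l * (Up N l).[b] = \sum_(l < N.+1) Y 0%N l * (Up N l).[b].
  move=> b hb0 hb1.
  pose p := \sum_(i < N.+1) (\sum_(l < N.+1) Y i l * (Up N l).[b]) *: Up N i.
  have p0 : p = 0.
    apply: poly_vanish => a ha0 ha1; rewrite -(H a b ha0 ha1 hb0 hb1) /p /Phi horner_sum.
    apply: eq_bigr => i _; rewrite hornerZ mulr_suml; apply: eq_bigr => l _; ring.
  exact: (@Up_kernel N (fun i => \sum_(l < N.+1) Y i l * (Up N l).[b]) p0).
move=> i l hi hl.
pose q := \sum_(l < N.+1) (Y i l - Y 0%N l) *: Up N l.
have q0 : q = 0.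
  apply: poly_vanish => b hb0 hb1; rewrite /q horner_sum.
  under eq_bigr do rewrite hornerZ mulrBl.
  by rewrite sumrB step1 // subrr.
have := @Up_kernel N (fun l => Y i l - Y 0%N l) q0 l hl.
move=> /= /eqP; rewrite -subr_eq0 => /eqP h.
apply/eqP; rewrite -subr_eq0; apply/eqP; rewrite -h; ring.
Qed.

Lemma Up_horner n i a : (i <= n)%N -> (Up n i).[a] =
  ('C(n,i))%:R * (i%:R * a ^+ i.-1 * (1 - a) ^+ (n - i) - (n - i)%:R * a ^+ i * (1 - a) ^+ (n - i).-1).
Proof.
move=> hi; rewrite /Up /Bp derivZ derivM derivXn deriv_exp derivB derivX.
rewrite -polyC1 derivC polyC1 sub0r.
rewrite !(hornerMn, hornerE) /=.
ring.
Qed.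

Lemma factR_neq0 m : ((m`!)%:R : R) != 0.
Proof. by rewrite pnatr_eq0 -lt0n fact_gt0. Qed.

Lemma Ta_eq n i a : (i <= n)%N -> 0 < a -> a < 1 ->
 ((n - i)%:R / (1 - a) - i%:R / a) * (a ^+ i * (1 - a) ^+ (n - i)) / ((i`!)%:R * ((n - i)`!)%:R)
  = - (Up n i).[a] / (n`!)%:R.
Proof.
move=> hi ha0 ha1.
have a0 : a != 0 by rewrite gt_eqF.
have a1 : 1 - a != 0 by rewrite subr_eq0 eq_sym lt_eqF.
rewrite Up_horner //.
have hbR : ('C(n,i))%:R * ((i`!)%:R * ((n-i)`!)%:R) = (n`!)%:R :> R by rewrite -!natrM bin_fact.
rewrite -hbR.
have e1 : i%:R / a * a ^+ i = i%:R * a ^+ i.-1.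
  by case: (i) => [|i']; [rewrite !mul0r | rewrite exprS /=; field; repeat (apply/andP; split)].
have e2 : (n-i)%:R / (1-a) * (1-a)^+(n-i) = (n-i)%:R * (1-a)^+(n-i).-1.
  by case: (n - i)%N => [|i']; [rewrite !mul0r | rewrite exprS /=; field; repeat (apply/andP; split)].
have f1 := factR_neq0 i; have f2 := factR_neq0 (n - i).
have cn : ('C(n,i))%:R != 0 :> R by rewrite pnatr_eq0 eqn0Ngt bin_gt0 hi.
transitivity (((n-i)%:R / (1-a) * (1-a)^+(n-i) * a^+i - i%:R / a * a^+i * (1-a)^+(n-i))
   / ((i`!)%:R * ((n - i)`!)%:R)).
  by field; repeat (apply/andP; split).
rewrite e2 e1.
by field; repeat (apply/andP; split).
Qed.

Definition Kc n : R := ((n.+1)`!)%:R / ((n`!)%:R ^+ 2).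
Definition Pm n (p : 'S_n.+1) (j m : nat) : R := ((p (inord j) : nat) == m)%:R.

Lemma sum_delta n (k : 'I_n.+1) (F : nat -> R) :
  \sum_(m < n.+1) ((k : nat) == m)%:R * F m = F k.
Proof.
rewrite (bigD1 k) //= eqxx mul1r big1 ?addr0 // => m hm.
by rewrite (inj_eq val_inj) eq_sym (negbTE hm) mul0r.
Qed.

Lemma grad_Phi n (p : 'S_n.+1) a b : 0 < a -> a < 1 -> 0 < b -> b < 1 ->
  gradpoly_k p a b = Kc n * Phi n (Pm p) a b.
Proof.
move=> ha0 ha1 hb0 hb1.
rewrite /gradpoly_k /Phi /Kc /Pm -mulrA; congr (_ * _); rewrite mulr_sumr.
apply: eq_bigr => i _.
rewrite (eq_bigr (fun m : 'I_n.+1 => ((p i : nat) == m)%:R * ((Up n i).[a] * (Up n m).[b]))); last first.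
  by move=> m _; rewrite inord_val.
rewrite (sum_delta (p i) (fun m => (Up n i).[a] * (Up n m).[b])).
rewrite !subSS.
have hi : (i <= n)%N by rewrite -ltnS.
have hpi : (p i <= n)%N by rewrite -ltnS.
have ea := Ta_eq hi ha0 ha1; have eb := Ta_eq hpi hb0 hb1.
have a0 : a != 0 by rewrite gt_eqF.
have a1 : 1 - a != 0 by rewrite subr_eq0 eq_sym lt_eqF.
have b0 : b != 0 by rewrite gt_eqF.
have b1 : 1 - b != 0 by rewrite subr_eq0 eq_sym lt_eqF.
have f1 := factR_neq0 i; have f2 := factR_neq0 (n - i).
have f3 := factR_neq0 (p i); have f4 := factR_neq0 (n - p i).
have f5 := factR_neq0 n.
transitivity ((((n - i)%:R / (1 - a) - i%:R / a) * (a ^+ i * (1 - a) ^+ (n - i)) / ((i`!)%:R * ((n - i)`!)%:R)) *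
  (((n - p i)%:R / (1 - b) - (p i)%:R / b) * (b ^+ (p i) * (1 - b) ^+ (n - p i)) / (((p i)`!)%:R * ((n - p i)`!)%:R))).
  by field; repeat (apply/andP; split).
rewrite ea eb.
by field; repeat (apply/andP; split).
Qed.

Definition pf n (p : 'S_n.+1) (j : nat) : nat := p (inord j).

Lemma pf_le n (p : 'S_n.+1) j : (pf p j <= n)%N.
Proof. by rewrite -ltnS ltn_ord. Qed.

Lemma pf_inj n (p : 'S_n.+1) j j' : (j <= n)%N -> (j' <= n)%N -> pf p j = pf p j' -> j = j'.
Proof.
move=> hj hj' /val_inj /perm_inj e; have := congr1 (@nat_of_ord _) e.
by rewrite !inordK // ltnS.
Qed.

Lemma pf_surj n (p : 'S_n.+1) l : (l <= n)%N -> exists j, (j <= n)%N /\ pf p j = l.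
Proof.
move=> hl; exists ((p^-1)%g (inord l) : nat); split; first by rewrite -ltnS ltn_ord.
by rewrite /pf inord_val permKV inordK // ltnS.
Qed.

Lemma pf_neq n (p q : 'S_n.+1) : p <> q -> exists j, (j <= n)%N /\ pf p j <> pf q j.
Proof.
move=> hpq; case: (pickP (fun x : 'I_n.+1 => p x != q x)) => [x hx | h].
  exists x; split; first by rewrite -ltnS ltn_ord.
  by rewrite /pf inord_val => /val_inj /eqP; rewrite (negbTE hx).
exfalso; apply: hpq; apply/permP => x; apply/eqP.
by move: (h x) => /negbFE.
Qed.

Lemma PmE n (p : 'S_n.+1) j m : Pm p j m = (pf p j == m)%:R.
Proof. by []. Qed.

Lemma PmE' n (p : 'S_n.+1) j m : Pm p j m = if pf p j == m then 1 else 0.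
Proof. by rewrite /Pm; case: ifP. Qed.

Lemma Pm_row n (p : 'S_n.+1) i : \sum_(l < n.+1) Pm p i l = 1.
Proof.
rewrite (eq_bigr (fun l : 'I_n.+1 => ((p (inord i) : nat) == l)%:R * 1)) //.
  by rewrite (sum_delta (p (inord i)) (fun _ => 1)).
by move=> l _; rewrite mulr1.
Qed.

Lemma Pm_col n (p : 'S_n.+1) l : (l <= n)%N -> \sum_(i < n.+1) Pm p i l = 1.
Proof.
move=> hl; have [j [hj e]] := pf_surj p hl.
rewrite (bigD1 (Ordinal (hj : (j < n.+1)%N))) //= /Pm -/(pf p j) e eqxx big1 ?addr0 //.
move=> i hi; rewrite -/(pf p i) -e; case: eqP => // /pf_inj h.
have := h (ltn_ord i : (i <= n)%N) hj => hij; move: hi; rewrite -val_eqE /= hij eqxx //.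
Qed.

Lemma add_const N (Y : nat -> nat -> R) r r' : addv N Y ->
  (forall i, (i <= N)%N -> \sum_(l < N.+1) Y i l = r) ->
  (forall l, (l <= N)%N -> \sum_(i < N.+1) Y i l = r') ->
  forall i l, (i <= N)%N -> (l <= N)%N -> Y i l = Y 0%N 0%N.
Proof.
move=> hA hr hc.
have hN : ((N.+1)%:R : R) != 0 by rewrite pnatr_eq0.
have rowi : forall i, (i <= N)%N -> Y i 0%N = Y 0%N 0%N.
  move=> i hi.
  have : \sum_(l < N.+1) Y i l = \sum_(l < N.+1) Y 0%N l + (N.+1)%:R * (Y i 0%N - Y 0%N 0%N).
    rewrite (eq_bigr (fun l : 'I_N.+1 => Y 0%N l + (Y i 0%N - Y 0%N 0%N))).
      by rewrite big_split /= sumr_const card_ord mulr_natl.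
    move=> l _; have := hA i l hi (ltn_ord l : (l <= N)%N) => e.
    by apply: (addIr (Y 0%N 0%N)); rewrite e; ring.
  rewrite hr // hr // => /eqP; rewrite addrC -subr_eq subrr eq_sym mulf_eq0 (negbTE hN) /=.
  by rewrite subr_eq0 => /eqP.
have coll : forall l, (l <= N)%N -> Y 0%N l = Y 0%N 0%N.
  move=> l hl.
  have : \sum_(i < N.+1) Y i l = \sum_(i < N.+1) Y i 0%N + (N.+1)%:R * (Y 0%N l - Y 0%N 0%N).
    rewrite (eq_bigr (fun i : 'I_N.+1 => Y i 0%N + (Y 0%N l - Y 0%N 0%N))).
      by rewrite big_split /= sumr_const card_ord mulr_natl.
    move=> i _; have := hA i l (ltn_ord i : (i <= N)%N) hl => e.
    by apply: (addIr (Y 0%N 0%N)); rewrite e; ring.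
  rewrite hc // hc // => /eqP; rewrite addrC -subr_eq subrr eq_sym mulf_eq0 (negbTE hN) /=.
  by rewrite subr_eq0 => /eqP.
move=> i l hi hl; have := hA i l hi hl; rewrite rowi // coll // => e.
by apply: (addIr (Y 0%N 0%N)).
Qed.

Lemma col3 (a b c : nat) : exists l, [/\ (l <= 3)%N, l != a, l != b & l != c].
Proof.
have : [|| [&& 0 != a, 0 != b & 0 != c]%N, [&& 1 != a, 1 != b & 1 != c]%N,
  [&& 2 != a, 2 != b & 2 != c]%N | [&& 3 != a, 3 != b & 3 != c]%N].
  by apply/negP => H; lia.
case/or4P => /and3P [h1 h2 h3]; [exists 0%N | exists 1%N | exists 2%N | exists 3%N]; by split.
Qed.

Lemma col2pair (u v : nat) : exists l1 l2, [/\ (l1 <= 3)%N, (l2 <= 3)%N, l1 != l2 &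
  [&& l1 != u, l1 != v, l2 != u & l2 != v]].
Proof.
have : [|| [&& 0 != u, 0 != v, 1 != u & 1 != v]%N, [&& 0 != u, 0 != v, 2 != u & 2 != v]%N,
   [&& 0 != u, 0 != v, 3 != u & 3 != v]%N |
   [|| [&& 1 != u, 1 != v, 2 != u & 2 != v]%N, [&& 1 != u, 1 != v, 3 != u & 3 != v]%N
     | [&& 2 != u, 2 != v, 3 != u & 3 != v]%N]].
  by apply/negP => H; lia.
case/or4P => [h|h|h|/or3P [h|h|h]];
  [exists 0%N, 1%N | exists 0%N, 2%N | exists 0%N, 3%N | exists 1%N, 2%N
  | exists 1%N, 3%N | exists 2%N, 3%N]; by split.
Qed.

Lemma pick3 (x y z u v : nat) : x != y -> x != z -> y != z ->
  exists w, [|| w == x, w == y | w == z] /\ (w != u) && (w != v).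
Proof.
move=> h1 h2 h3.
have : [|| (x != u) && (x != v), (y != u) && (y != v) | (z != u) && (z != v)].
  by apply/negP => H; lia.
by case/or3P => h; [exists x | exists y | exists z]; rewrite eqxx ?orbT.
Qed.

Lemma two_zero n (p q : 'S_n.+1) c1 c2 : p <> q ->
  (forall i l, (i <= n)%N -> (l <= n)%N -> c1 * Pm p i l + c2 * Pm q i l = 0) ->
  c1 = 0 /\ c2 = 0.
Proof.
move=> hpq H; have [j [hj ne]] := pf_neq hpq.
have e1 := H j (pf p j) hj (pf_le p j); have e2 := H j (pf q j) hj (pf_le q j).
rewrite !PmE' !eqxx /= in e1 e2.
have ne' : (pf q j == pf p j) = false by apply/eqP => h; apply: ne.
have ne'' : (pf p j == pf q j) = false by apply/eqP.
by rewrite ne' /= mulr0 addr0 mulr1 in e1; rewrite ne'' /= mulr0 add0r mulr1 in e2.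
Qed.

Lemma three_zero n (p q r : 'S_n.+1) c1 c2 c3 : p <> q -> p <> r -> q <> r ->
  (forall i l, (i <= n)%N -> (l <= n)%N -> c1 * Pm p i l + c2 * Pm q i l + c3 * Pm r i l = 0) ->
  [/\ c1 = 0, c2 = 0 & c3 = 0].
Proof.
move=> hpq hpr hqr H; have [j [hj ne]] := pf_neq hpq.
have ea := H j (pf p j) hj (pf_le p j); have eb := H j (pf q j) hj (pf_le q j).
have ec := H j (pf r j) hj (pf_le r j).
rewrite !PmE' !eqxx /= in ea eb ec.
have ne1 : (pf q j == pf p j) = false by apply/eqP => h; apply: ne.
have ne2 : (pf p j == pf q j) = false by apply/eqP.
rewrite ne1 /= mulr0 addr0 mulr1 in ea; rewrite ne2 /= mulr0 add0r mulr1 in eb.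
rewrite mulr1 in ec.
case: (eqVneq (pf r j) (pf p j)) => e1.
  rewrite e1 eqxx /= in ea.
  have c20 : c2 = 0.
    by move: eb; rewrite e1 ne2 /= mulr0 addr0.
  have [h1 h3] : c1 = 0 /\ c3 = 0.
    apply: (two_zero hpr) => i l hi hl; have := H i l hi hl; by rewrite c20 mul0r addr0.
  by split.
case: (eqVneq (pf r j) (pf q j)) => e2.
  have c10 : c1 = 0.
    by move: ea; rewrite (negbTE e1) /= mulr0 addr0.
  have [h2 h3] : c2 = 0 /\ c3 = 0.
    apply: (two_zero hqr) => i l hi hl; have := H i l hi hl; by rewrite c10 mul0r add0r.
  by split.
have c30 : c3 = 0.
  by move: ec; rewrite [pf p j == _]eq_sym [pf q j == _]eq_sym (negbTE e1) (negbTE e2) /= !mulr0 !add0r.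
move: ea eb; rewrite (negbTE e1) (negbTE e2) /= !mulr0 !addr0 => -> ->.
by split.
Qed.

Lemma top_lemma N (p : 'S_N.+1) c (Z : nat -> nat -> R) : (0 < N)%N ->
  addv N (fun i l => c * Pm p i l + Z i l) ->
  (forall i, (i <= N)%N -> \sum_(l < N.+1) Z i l * xtop N l = 0) -> c = 0.
Proof.
move=> hN hA hZ.
pose Y := fun i l => c * Pm p i l + Z i l.
have hS : forall i, (i <= N)%N -> \sum_(l < N.+1) Y i l * xtop N l = c * xtop N (pf p i).
  move=> i hi; rewrite /Y.
  under eq_bigr do rewrite mulrDl.
  rewrite big_split /= hZ // addr0.
  under eq_bigr do rewrite -mulrA.
  rewrite -mulr_sumr; congr (_ * _).
  by rewrite /Pm (sum_delta (p (inord i)) (xtop N)).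
have hA' : forall i, (i <= N)%N ->
    \sum_(l < N.+1) Y i l * xtop N l = \sum_(l < N.+1) Y 0%N l * xtop N l.
  move=> i hi.
  rewrite (eq_bigr (fun l : 'I_N.+1 => (Y i 0%N - Y 0%N 0%N) * xtop N l + Y 0%N l * xtop N l)).
    by rewrite big_split /= -mulr_sumr xtop_sum // mulr0 add0r.
  move=> l _; have e := hA i l hi (ltn_ord l : (l <= N)%N).
  have -> : Y i l = Y i 0%N + Y 0%N l - Y 0%N 0%N.
    by apply: (addIr (Y 0%N 0%N)); rewrite /Y e; ring.
  ring.
apply/eqP; apply: contraT => c0.
have hx : forall l, (l <= N)%N -> xtop N l = xtop N (pf p 0).
  move=> l hl; have [j [hj <-]] := pf_surj p hl.
  by have := hA' j hj; rewrite !hS // => /(mulfI c0).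
have : \sum_(l < N.+1) xtop N l = (N.+1)%:R * xtop N (pf p 0).
  rewrite (eq_bigr (fun _ => xtop N (pf p 0))) ?sumr_const ?card_ord ?mulr_natl //.
  by move=> l _; apply: hx; rewrite -ltnS.
rewrite xtop_sum // -(hx N (leqnn N)) xtop_N mulr1 => /eqP.
by rewrite eq_sym pnatr_eq0.
Qed.

Lemma elev_kill n N Z i : (n < N)%N -> \sum_(l < N.+1) Elev n N Z i l * xtop N l = 0.
Proof.
move=> hnN; rewrite /Elev.
under eq_bigr do rewrite mulr_suml.
under eq_bigr do under eq_bigr do rewrite mulr_suml.
rewrite exchange_big /=; apply: big1 => j _.
rewrite exchange_big /=; apply: big1 => m _.
under eq_bigr do rewrite -mulrA.
by rewrite -mulr_sumr top_kill ?mulr0 // -ltnS.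
Qed.

Lemma ElevPm n N (r : 'S_n.+1) i l :
  Elev n N (Pm r) i l = \sum_(j < n.+1) Ec n N j i * Ec n N (pf r j) l.
Proof.
rewrite /Elev; apply: eq_bigr => j _.
rewrite (eq_bigr (fun m : 'I_n.+1 => ((r (inord j) : nat) == m)%:R * (Ec n N j i * Ec n N m l))).
  by rewrite (sum_delta (r (inord j)) (fun m => Ec n N j i * Ec n N m l)).
by move=> m _; rewrite /Pm; ring.
Qed.

Lemma CNn_neq0 n N : (n <= N)%N -> (('C(N,n))%:R : R) != 0.
Proof. by move=> h; rewrite pnatr_eq0 eqn0Ngt bin_gt0 h. Qed.

Lemma Ec_col0 n N j : (n <= N)%N -> Ec n N j 0 = (j == 0)%:R.
Proof.
move=> h; rewrite /Ec subn0; case: j => [|j] /=.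
  by rewrite bin0 subn0 mul1n divff // CNn_neq0.
by rewrite bin0n mul0n mul0r.
Qed.

Lemma Ec_colN n N j : (n <= N)%N -> (j <= n)%N -> Ec n N j N = (j == n)%:R.
Proof.
move=> h hj; rewrite /Ec subnn.
case: (eqVneq j n) => [->|ne] /=.
  by rewrite subnn bin0 muln1 divff // CNn_neq0.
rewrite bin0n; have -> : (n - j == 0)%N = false by apply/negbTE; rewrite subn_eq0 -ltnNge ltn_neqAle ne hj.
by rewrite muln0 mul0r.
Qed.

Lemma Ec_pos n N j i : (n <= N)%N -> (j <= i)%N -> (n - j <= N - i)%N -> 0 < Ec n N j i.
Proof.
move=> h1 h2 h3; rewrite /Ec divr_gt0 // ltr0n ?bin_gt0 //.
by rewrite muln_gt0 !bin_gt0 h2 h3.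
Qed.

Definition sN n N : R := ('C(N.+1,n.+1))%:R / ('C(N,n))%:R.

Lemma Ec_rowsum n N j : (j <= n)%N -> \sum_(l < N.+1) Ec n N j l = sN n N.
Proof.
move=> hj; rewrite /Ec /sN -mulr_suml -natr_sum.
by rewrite (sum_bin_row N j (n - j)%N) subnKC.
Qed.

Lemma Ec_colsum n N i : (n <= N)%N -> (i <= N)%N -> \sum_(j < n.+1) Ec n N j i = 1.
Proof.
move=> h hi; rewrite /Ec -mulr_suml -natr_sum.
by rewrite (binomial.Vandermonde i (N - i)%N n) subnKC // divff // CNn_neq0.
Qed.

Lemma A_rows n N (r : 'S_n.+1) i : (n <= N)%N -> (i <= N)%N ->
  \sum_(l < N.+1) Elev n N (Pm r) i l = sN n N.
Proof.
move=> h hi; under eq_bigr do rewrite ElevPm.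
rewrite exchange_big /=.
under eq_bigr do rewrite -mulr_sumr Ec_rowsum ?pf_le //.
by rewrite -mulr_suml Ec_colsum // mul1r.
Qed.

Lemma A_cols n N (r : 'S_n.+1) l : (n <= N)%N -> (l <= N)%N ->
  \sum_(i < N.+1) Elev n N (Pm r) i l = sN n N.
Proof.
move=> h hl; under eq_bigr do rewrite ElevPm.
rewrite exchange_big /=.
under eq_bigr do rewrite -mulr_suml Ec_rowsum ?leq_ord //.
rewrite -mulr_sumr.
rewrite (eq_bigr (fun j : 'I_n.+1 => Ec n N (r j) l)); last by move=> j _; rewrite /pf inord_val.
have -> : \sum_(j < n.+1) Ec n N (r j) l = \sum_(j < n.+1) Ec n N j l.
  by rewrite [RHS](reindex_inj (@perm_inj _ r)).
by rewrite Ec_colsum // mulr1.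
Qed.

Lemma Ec_row0' n N i : Ec n N 0 i = ('C(N-i,n))%:R / ('C(N,n))%:R.
Proof. by rewrite /Ec bin0 mul1n subn0. Qed.

Lemma Ec_rown' n N i : Ec n N n i = ('C(i,n))%:R / ('C(N,n))%:R.
Proof. by rewrite /Ec subnn bin0 muln1. Qed.

Lemma pos_sum n (F : 'I_n.+1 -> R) k : (forall j, 0 <= F j) -> 0 < F k -> 0 < \sum_(j < n.+1) F j.
Proof.
move=> h0 hk; rewrite (bigD1 k) //=.
by apply: (lt_le_trans hk); rewrite lerDl sumr_ge0.
Qed.

Lemma mixed N n (p q : 'S_N.+1) (r : 'S_n.+1) (g1 g2 lam : R) :
  (3 <= N)%N -> (0 < n)%N -> (n < N)%N ->
  (forall i l, (i <= N)%N -> (l <= N)%N ->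
     g1 * Pm p i l + g2 * Pm q i l + Elev n N (Pm r) i l = lam) -> False.
Proof.
move=> hN hn hnN H.
have hnN' : (n <= N)%N := ltnW hnN.
have HA : forall i l, (i <= N)%N -> (l <= N)%N -> l != pf p i -> l != pf q i ->
    Elev n N (Pm r) i l = lam.
  move=> i l hi hl h1 h2; have := H i l hi hl.
  by rewrite !PmE' [pf p i == l]eq_sym (negbTE h1) [pf q i == l]eq_sym (negbTE h2) !mulr0 !add0r.
have A0 : forall l, Elev n N (Pm r) 0 l = Ec n N (pf r 0) l.
  move=> l; rewrite ElevPm (bigD1 ord0) //= Ec_col0 // eqxx mul1r big1 ?addr0 // => j hj.
  rewrite Ec_col0 //.
  have -> : (nat_of_ord j == 0%N) = false.
    by apply/negbTE; move: hj; apply: contra => /eqP h; apply/eqP/val_inj.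
  by rewrite mul0r.
have AN : forall l, Elev n N (Pm r) N l = Ec n N (pf r n) l.
  move=> l; rewrite ElevPm (bigD1 ord_max) //= Ec_colN // eqxx mul1r big1 ?addr0 // => j hj.
  rewrite Ec_colN //; last by rewrite -ltnS.
  have -> : (nat_of_ord j == n) = false.
    by apply/negbTE; move: hj; apply: contra => /eqP h; apply/eqP/val_inj.
  by rewrite mul0r.
case: (eqVneq lam 0) => hl0.
  have pos1 : forall j l, (j <= 1)%N -> (pf r j <= l)%N -> (l <= (pf r j).+1)%N ->
      0 < Elev n N (Pm r) 1 l.
    move=> j l hj h1 h2.
    have hjn : (j < n.+1)%N by lia.
    rewrite ElevPm; apply: (@pos_sum _ _ (Ordinal hjn)).
      by move=> k; rewrite mulr_ge0 ?Ec_ge0.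
    have := pf_le r j => hr.
    by rewrite /= mulr_gt0 // Ec_pos //; lia.
  have r01 : pf r 0 != pf r 1.
    by apply/eqP => /pf_inj h; have := h (leq0n _) hn.
  have hr0 := pf_le r 0; have hr1 := pf_le r 1.
  have [x [y [z [hxy hxz hyz [px py pz] [hx hy hz]]]]] : exists x y z,
     [/\ x != y, x != z, y != z,
       [/\ 0 < Elev n N (Pm r) 1 x, 0 < Elev n N (Pm r) 1 y & 0 < Elev n N (Pm r) 1 z] &
       [/\ (x <= N)%N, (y <= N)%N & (z <= N)%N]].
    case: (ltngtP (pf r 0) (pf r 1)) => h; last by move: r01; rewrite h eqxx.
      exists (pf r 0), (pf r 0).+1, (pf r 1).+1; split; try lia; last by split; lia.
      split; [apply: (pos1 0%N) | apply: (pos1 0%N) | apply: (pos1 1%N)]; lia.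
    exists (pf r 1), (pf r 1).+1, (pf r 0).+1; split; try lia; last by split; lia.
    split; [apply: (pos1 1%N) | apply: (pos1 1%N) | apply: (pos1 0%N)]; lia.
  have [w [hw /andP [hw1 hw2]]] := pick3 (pf p 1) (pf q 1) hxy hxz hyz.
  have hwN : (w <= N)%N by case/or3P: hw => /eqP ->.
  have pw : 0 < Elev n N (Pm r) 1 w by case/or3P: hw => /eqP ->.
  by move: pw; rewrite HA // ?hl0 ?ltxx //; lia.
case: (leqP 3 n) => hn3.
  have [x [y [z [/andP [/andP [hxy hxz] hyz] /andP [/andP [hx hy] hz] /andP [/andP [zx zy] zz]]]]] :=
    zcols hn3 hnN (pf_le r 0).
  have [w [hw /andP [hw1 hw2]]] := pick3 (pf p 0) (pf q 0) hxy hxz hyz.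
  have hwN : (w <= N)%N by case/or3P: hw => /eqP ->.
  have zw : Ec n N (pf r 0) w = 0.
    by apply: Ec_zero; case/or3P: hw => /eqP ->.
  by move: hl0; rewrite -(HA 0%N w) // A0 zw eqxx.
have [R0 [v [hR hv hrow]]] : exists R0 v, [/\ (R0 <= N)%N, (v == 0%N) || (v == n) &
    forall l, Elev n N (Pm r) R0 l = Ec n N v l].
  case: (boolP ((pf r 0 == 0%N) || (pf r 0 == n))) => h.
    by exists 0%N, (pf r 0); split.
  exists N, (pf r n); split => //.
  have hr0 := pf_le r 0; have hrn := pf_le r n.
  have ne : pf r 0 != pf r n by apply/eqP => /pf_inj e; have := e (leq0n _) (leqnn n); lia.
  lia.
have [l1 [l2 [h1 h2 h12 /and4P [a1 a2 b1 b2]]]] := col2pair (pf p R0) (pf q R0).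
have e1 := HA R0 l1 hR (leq_trans h1 hN) a1 a2.
have e2 := HA R0 l2 hR (leq_trans h2 hN) b1 b2.
rewrite hrow in e1; rewrite hrow in e2.
have cN := CNn_neq0 hnN'.
case/orP: hv => /eqP hv; subst v.
  rewrite Ec_row0' in e1; rewrite Ec_row0' in e2.
  have e : 'C(N - l1, n) = 'C(N - l2, n).
    have := congr1 (fun x => x * ('C(N,n))%:R) (etrans e1 (esym e2)).
    by rewrite /= !divfK // => /eqP; rewrite eqr_nat => /eqP.
  have hp : (0 < 'C(N - l1, n))%N.
    rewrite lt0n; apply/eqP => h0; move: hl0; rewrite -e1 h0 mul0r eqxx //.
  have := bin_inj hn e hp => hh.
  have hl12 : l1 = l2 by lia.
  by move: h12; rewrite hl12 eqxx.
rewrite Ec_rown' in e1; rewrite Ec_rown' in e2.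
have e : 'C(l1, n) = 'C(l2, n).
  have := congr1 (fun x => x * ('C(N,n))%:R) (etrans e1 (esym e2)).
  by rewrite /= !divfK // => /eqP; rewrite eqr_nat => /eqP.
have hp : (0 < 'C(l1, n))%N.
  rewrite lt0n; apply/eqP => h0; move: hl0; rewrite -e1 h0 mul0r eqxx //.
have := bin_inj hn e hp => hh.
by move: h12; rewrite hh eqxx.
Qed.

Lemma col2 (u v : nat) : exists l, [/\ (l <= 2)%N, l != u & l != v].
Proof.
have : [|| (0 != u) && (0 != v), (1 != u) && (1 != v) | (2 != u) && (2 != v)]%N.
  by apply/negP => H; lia.
by case/or3P => /andP [h1 h2]; [exists 0%N | exists 1%N | exists 2%N]; split.
Qed.

Lemma Kc_neq0 n : Kc n != 0.
Proof. by rewrite /Kc mulf_neq0 ?invr_neq0 ?expf_neq0 ?factR_neq0. Qed.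

Lemma PhiL3 n (Z1 Z2 Z3 : nat -> nat -> R) x y z a b :
  Phi n (fun i l => x * Z1 i l + y * Z2 i l + z * Z3 i l) a b =
  x * Phi n Z1 a b + y * Phi n Z2 a b + z * Phi n Z3 a b.
Proof.
rewrite /Phi !mulr_sumr -!big_split; apply: eq_bigr => j _ /=.
rewrite !mulr_sumr -!big_split; apply: eq_bigr => m _ /=.
ring.
Qed.

Lemma addv_ext N (Y Y' : nat -> nat -> R) : (forall i l, Y i l = Y' i l) -> addv N Y -> addv N Y'.
Proof. by move=> e h i l hi hl; rewrite -!e; apply: h. Qed.

Lemma core n1 n2 n3 (p1 : 'S_n1.+1) (p2 : 'S_n2.+1) (p3 : 'S_n3.+1) (c1 c2 c3 : R) :
  (existT (fun k => 'S_k) n1.+1 p1 : anyperm) <> existT (fun k => 'S_k) n2.+1 p2 ->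
  (existT (fun k => 'S_k) n1.+1 p1 : anyperm) <> existT (fun k => 'S_k) n3.+1 p3 ->
  (existT (fun k => 'S_k) n2.+1 p2 : anyperm) <> existT (fun k => 'S_k) n3.+1 p3 ->
  (3 <= n1)%N -> (0 < n3)%N -> (n3 <= n2)%N -> (n2 <= n1)%N ->
  [\/ c1 != 0, c2 != 0 | c3 != 0] ->
  (forall a b, 0 < a -> a < 1 -> 0 < b -> b < 1 ->
     c1 * (Kc n1 * Phi n1 (Pm p1) a b) + c2 * (Kc n2 * Phi n2 (Pm p2) a b)
       + c3 * (Kc n3 * Phi n3 (Pm p3) a b) = 0) ->
  n2 = 1%N /\ n3 = 1%N.
Proof.
move=> ne12 ne13 ne23 h1 hn3 h32 h21 hc Hd.
pose d1 := c1 * Kc n1; pose d2 := c2 * Kc n2; pose d3 := c3 * Kc n3.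
have Hd' : forall a b, 0 < a -> a < 1 -> 0 < b -> b < 1 ->
   d1 * Phi n1 (Pm p1) a b + d2 * Phi n2 (Pm p2) a b + d3 * Phi n3 (Pm p3) a b = 0.
  by move=> a b ha0 ha1 hb0 hb1; rewrite -(Hd a b ha0 ha1 hb0 hb1) /d1 /d2 /d3; ring.
have allz : d1 = 0 -> d2 = 0 -> d3 = 0 -> False.
  move=> e1 e2 e3; move: e1 e2 e3; rewrite /d1 /d2 /d3.
  move=> /eqP; rewrite mulf_eq0 (negbTE (Kc_neq0 _)) orbF => /eqP e1.
  move=> /eqP; rewrite mulf_eq0 (negbTE (Kc_neq0 _)) orbF => /eqP e2.
  move=> /eqP; rewrite mulf_eq0 (negbTE (Kc_neq0 _)) orbF => /eqP e3.
  by case: hc; rewrite ?e1 ?e2 ?e3 eqxx.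
have hn1 : (0 < n1)%N by lia.
case: (ltnP n2 n1) => h21s.
  have H1 : addv n1 (fun i l => d1 * Pm p1 i l +
      (d2 * Elev n2 n1 (Pm p2) i l + d3 * Elev n3 n1 (Pm p3) i l)).
    apply: (addv_ext (Y := fun i l => d1 * Pm p1 i l + d2 * Elev n2 n1 (Pm p2) i l
                                   + d3 * Elev n3 n1 (Pm p3) i l)).
      by move=> i l; rewrite addrA.
    apply: Phi_zero => a b ha0 ha1 hb0 hb1.
    rewrite PhiL3 -(Phi_elev _ _ _ (ltnW h21s)) -(Phi_elev _ _ _ (leq_trans h32 (ltnW h21s))).
    exact: Hd'.
  have d10 : d1 = 0.
    apply: (top_lemma hn1 H1) => i hi.
    under eq_bigr do rewrite mulrDl -!mulrA.
    rewrite big_split /= -!mulr_sumr !elev_kill ?mulr0 ?addr0 //.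
    exact: (leq_ltn_trans h32 h21s).
  case: (ltnP n3 n2) => h32s.
    have H2 : addv n2 (fun i l => d2 * Pm p2 i l + d3 * Elev n3 n2 (Pm p3) i l).
      apply: (addv_ext (Y := fun i l => 0 * Pm p2 i l + d2 * Pm p2 i l
                                   + d3 * Elev n3 n2 (Pm p3) i l)).
        by move=> i l; rewrite mul0r add0r.
      apply: Phi_zero => a b ha0 ha1 hb0 hb1.
      rewrite PhiL3 -(Phi_elev _ _ _ (ltnW h32s)) mul0r add0r.
      by have := Hd' a b ha0 ha1 hb0 hb1; rewrite d10 mul0r add0r.
    have d20 : d2 = 0.
      apply: (top_lemma _ H2) => [|i hi]; first by lia.
      under eq_bigr do rewrite -mulrA.
      by rewrite -mulr_sumr elev_kill ?mulr0.
    have H3 : addv n3 (fun i l => d3 * Pm p3 i l + 0).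
      apply: (addv_ext (Y := fun i l => 0 * Pm p3 i l + 0 * Pm p3 i l + d3 * Pm p3 i l)).
        by move=> i l; rewrite !mul0r !add0r addr0.
      apply: Phi_zero => a b ha0 ha1 hb0 hb1.
      rewrite PhiL3 !mul0r !add0r.
      by have := Hd' a b ha0 ha1 hb0 hb1; rewrite d10 d20 !mul0r !add0r.
    have d30 : d3 = 0.
      apply: (top_lemma hn3 H3) => i hi.
      by rewrite big1 // => l _; rewrite mul0r.
    by exfalso; apply: allz.
  have e32 : n3 = n2 by lia.
  subst n3.
  have hp23 : p2 <> p3 by move=> e; apply: ne23; rewrite e.
  have H2 : addv n2 (fun i l => d2 * Pm p2 i l + d3 * Pm p3 i l).
    apply: (addv_ext (Y := fun i l => 0 * Pm p2 i l + d2 * Pm p2 i l + d3 * Pm p3 i l)).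
      by move=> i l; rewrite mul0r add0r.
    apply: Phi_zero => a b ha0 ha1 hb0 hb1.
    rewrite PhiL3 mul0r add0r.
    by have := Hd' a b ha0 ha1 hb0 hb1; rewrite d10 mul0r add0r.
  case: (leqP n2 1) => hn2; first by split; lia.
  have hr : forall i, (i <= n2)%N -> \sum_(l < n2.+1)
      (d2 * Pm p2 i l + d3 * Pm p3 i l) = d2 + d3.
    by move=> i hi; rewrite !big_split /= -!mulr_sumr !Pm_row !mulr1.
  have hcl : forall l, (l <= n2)%N -> \sum_(i < n2.+1)
      (d2 * Pm p2 i l + d3 * Pm p3 i l) = d2 + d3.
    by move=> l hl; rewrite !big_split /= -!mulr_sumr !Pm_col ?mulr1.
  have Hc := add_const H2 hr hcl.
  have [l [hl hl1 hl2]] := col2 (pf p2 0) (pf p3 0).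
  have Y0 : d2 * Pm p2 0 l + d3 * Pm p3 0 l = 0.
    by rewrite !PmE' eq_sym (negbTE hl1) eq_sym (negbTE hl2) !mulr0 addr0.
  have Hz : forall i l, (i <= n2)%N -> (l <= n2)%N -> d2 * Pm p2 i l + d3 * Pm p3 i l = 0.
    move=> i l' hi hl'; rewrite (Hc i l' hi hl') -Y0 (Hc 0%N l) //; lia.
  have [e2 e3] := two_zero hp23 Hz.
  by exfalso; apply: allz.
have e21 : n2 = n1 by lia.
subst n2.
have hp12 : p1 <> p2 by move=> e; apply: ne12; rewrite e.
case: (ltnP n3 n1) => h31.
  have H1 : addv n1 (fun i l => d1 * Pm p1 i l + d2 * Pm p2 i l + d3 * Elev n3 n1 (Pm p3) i l).
    apply: Phi_zero => a b ha0 ha1 hb0 hb1.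
    rewrite PhiL3 -(Phi_elev _ _ _ (ltnW h31)).
    exact: Hd'.
  have hr : forall i, (i <= n1)%N -> \sum_(l < n1.+1)
      (d1 * Pm p1 i l + d2 * Pm p2 i l + d3 * Elev n3 n1 (Pm p3) i l) = d1 + d2 + d3 * sN n3 n1.
    by move=> i hi; rewrite !big_split /= -!mulr_sumr !Pm_row (A_rows _ (ltnW h31) hi) !mulr1.
  have hcl : forall l, (l <= n1)%N -> \sum_(i < n1.+1)
      (d1 * Pm p1 i l + d2 * Pm p2 i l + d3 * Elev n3 n1 (Pm p3) i l) = d1 + d2 + d3 * sN n3 n1.
    by move=> l hl; rewrite !big_split /= -!mulr_sumr !(Pm_col _ hl) (A_cols _ (ltnW h31) hl) !mulr1.
  have Hc := add_const H1 hr hcl.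
  case: (eqVneq d3 0) => d30.
    have [l [hl hl1 hl2]] := col2 (pf p1 0) (pf p2 0).
    have Y0 : d1 * Pm p1 0 l + d2 * Pm p2 0 l + d3 * Elev n3 n1 (Pm p3) 0 l = 0.
      by rewrite d30 !PmE' eq_sym (negbTE hl1) eq_sym (negbTE hl2) !mul0r !mulr0 !addr0.
    have Hz : forall i l, (i <= n1)%N -> (l <= n1)%N -> d1 * Pm p1 i l + d2 * Pm p2 i l = 0.
      move=> i l' hi hl'.
      have := Hc i l' hi hl'; rewrite -[in RHS](Hc 0%N l) //; last by lia.
      by rewrite Y0 d30 mul0r addr0.
    have [e1 e2] := two_zero hp12 Hz.
    by exfalso; apply: allz.
  exfalso.
  apply: (@mixed n1 n3 p1 p2 p3 (d1 / d3) (d2 / d3) ((d1 * Pm p1 0 0 + d2 * Pm p2 0 0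
      + d3 * Elev n3 n1 (Pm p3) 0 0) / d3) h1 hn3 h31) => i l hi hl.
  rewrite -(Hc i l hi hl).
  by field.
have e31 : n3 = n1 by lia.
subst n3.
have hp13 : p1 <> p3 by move=> e; apply: ne13; rewrite e.
have hp23 : p2 <> p3 by move=> e; apply: ne23; rewrite e.
have H1 : addv n1 (fun i l => d1 * Pm p1 i l + d2 * Pm p2 i l + d3 * Pm p3 i l).
  apply: Phi_zero => a b ha0 ha1 hb0 hb1.
  rewrite PhiL3.
  exact: Hd'.
have hr : forall i, (i <= n1)%N -> \sum_(l < n1.+1)
    (d1 * Pm p1 i l + d2 * Pm p2 i l + d3 * Pm p3 i l) = d1 + d2 + d3.
  by move=> i hi; rewrite !big_split /= -!mulr_sumr !Pm_row !mulr1.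
have hcl : forall l, (l <= n1)%N -> \sum_(i < n1.+1)
    (d1 * Pm p1 i l + d2 * Pm p2 i l + d3 * Pm p3 i l) = d1 + d2 + d3.
  by move=> l hl; rewrite !big_split /= -!mulr_sumr !Pm_col ?mulr1.
have Hc := add_const H1 hr hcl.
have [l [hl hl1 hl2 hl3]] := col3 (pf p1 0) (pf p2 0) (pf p3 0).
have Y0 : d1 * Pm p1 0 l + d2 * Pm p2 0 l + d3 * Pm p3 0 l = 0.
  by rewrite !PmE' eq_sym (negbTE hl1) eq_sym (negbTE hl2) eq_sym (negbTE hl3) !mulr0 !addr0.
have Hz : forall i l, (i <= n1)%N -> (l <= n1)%N ->
    d1 * Pm p1 i l + d2 * Pm p2 i l + d3 * Pm p3 i l = 0.
  move=> i l' hi hl'; rewrite (Hc i l' hi hl') -Y0 (Hc 0%N l) //; lia.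
have [e1 e2 e3] := three_zero hp12 hp13 hp23 Hz.
by exfalso; apply: allz.
Qed.

End PolyPart.

Theorem lemma13 (R : realType) (s1 s2 s3 : anyperm) :
  s1 <> s2 -> s1 <> s3 -> s2 <> s3 ->
  (2 <= porder s1)%N -> (2 <= porder s2)%N -> (2 <= porder s3)%N ->
  (porder s2 <= porder s1)%N -> (porder s3 <= porder s2)%N ->
  lin_dep3 R s1 s2 s3 ->
  (3 < porder s1)%N ->
  porder s2 = 2%N /\ porder s3 = 2%N.
Proof.
case: s1 => k1 p1; case: s2 => k2 p2; case: s3 => k3 p3.
rewrite /porder /=.
move=> ne12 ne13 ne23 h1 h2 h3 h21 h32 [c1 [c2 [c3 [hc Hd]]]] h4.
case: k1 p1 ne12 ne13 Hd h1 h21 h4 => [|n1] p1 ne12 ne13 Hd h1 h21 h4 //.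
case: k2 p2 ne12 ne23 Hd h2 h21 h32 => [|n2] p2 ne12 ne23 Hd h2 h21 h32 //.
case: k3 p3 ne13 ne23 Hd h3 h32 => [|n3] p3 ne13 ne23 Hd h3 h32 //.
have [e2 e3] : n2 = 1%N /\ n3 = 1%N.
  apply: (@core R n1 n2 n3 p1 p2 p3 c1 c2 c3 ne12 ne13 ne23) => //.
  move=> a b ha0 ha1 hb0 hb1.
  rewrite -!grad_Phi //.
  by apply: Hd; apply/andP; split.
by rewrite e2 e3.
Qed.
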